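(* Let $v$ be a continuous viscosity supersolution of the quasi-variational inequality with boundary-terminal condition, and assume $\sup_{[0,T]\times[0,\infty)}(|b|+|\sigma|)<\infty$. Let $\rho=\frac12\min_{z\neq0}c(z)>0$, $C_5=\|b\|_\infty(\max(C_2,C_3)+1)+2\rho$, $g(t,x,y,z)=x+y+C_5(T-t)$, and for $\varepsilon>0$ set $v^\varepsilon=v+\varepsilon g$. Then for every $(\bar t,\bar x,\bar y,\bar z)\in(0,T)\times O$ and every function $\varphi^\varepsilon$, $C^1$ in $t$ and $C^2$ in $(x,y)$, with $\varphi^\varepsilon\le v^\varepsilon$ on $(0,T)\times O$ and $\varphi^\varepsilon=v^\varepsilon$ at $(\bar t,\bar x,\bar y,\bar z)$, $$(\varphi^\varepsilon-\mathcal S\varphi^\varepsilon)(\bar t,\bar x,\bar y,\bar z)>\varepsilon\rho\quad\text{and}\quad(-\varphi^\varepsilon_t-\mathcal L\varphi^\varepsilon)(\bar t,\bar x,\bar y,\bar z)>\varepsilon\rho.$$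
   Context: $T>0$; $b,\sigma:[0,T]\times[0,\infty)\to\mathbb R$. Transaction cost $c:\mathbb Z\to\mathbb R$ with $c(0)=0$, $c(z)>0$ for $z\ne0$, $c(z_1)+c(z_2)\ge c(z_1+z_2)$. Utility $U$ as a nonnegative strictly increasing strictly concave function on $[0,\infty)$ with $U(0)=0$. $\mathcal K=\{-C_2,\dots,C_3\}$ ($C_2,C_3$ positive integers). $O=\{(x,y,z):x>0,\ y>c(-z),\ z\in\mathcal K\}$. $\Gamma(y,z)=\{\tilde z\in\mathcal K: c(\tilde z-z)+c(-\tilde z)\le y,\ \tilde z\ne z\}$. Operators: $\mathcal L\varphi=b\varphi_x+\frac12\sigma^2\varphi_{xx}+zb\varphi_y+\frac12z^2\sigma^2\varphi_{yy}+z\sigma^2\varphi_{xy}$ ($b,\sigma$ at $(t,x)$); $\mathcal S\varphi(t,x,y,z)=\max_{\tilde z\in\Gamma(y,z)}\varphi(t,x,y-c(\tilde z-z),\tilde z)$ (max over empty set $=-\infty$). Parabolic boundary $\partial^*([0,T)\times O)=([0,T]\times\bar O)\setminus([0,T)\times O)$. QVI: $\min\{-u_t-\mathcal Lu,\ u-\mathcal Su\}=0$ on $[0,T)\times O$, boundary-terminal condition $u=U(y-c(-z))$ on $\partial^*([0,T)\times O)$. Viscosity supersolution: for every $(t_0,x_0,y_0,z_0)\in(0,T)\times O$ and every $\varphi$ ($C^1$ in $t$, $C^2$ in $(x,y)$) with $\varphi\le v$ and $\varphi=v$ at that point, $\min\{(-\varphi_t-\mathcal L\varphi),(\varphi-\mathcal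 S\varphi)\}(t_0,x_0,y_0,z_0)\ge0$; and $v\ge U(y-c(-z))$ on $\partial^*([0,T)\times O)$. *)

(* Defs.v *)
From Stdlib Require Import Reals Lra ZArith List.
Open Scope R_scope.

Definition inK (C2 C3 : Z) (z : Z) : Prop := (- C2 <= z <= C3)%Z.

Definition Klist (C2 C3 : Z) : list Z :=
  List.map (fun k => (- C2 + Z.of_nat k)%Z) (List.seq 0 (Z.to_nat (C2 + C3 + 1))).

Definition inO (c : Z -> R) (C2 C3 : Z) (x y : R) (z : Z) : Prop :=
  0 < x /\ c (- z)%Z < y /\ inK C2 C3 z.

Definition inObar (c : Z -> R) (C2 C3 : Z) (x y : R) (z : Z) : Prop :=
  0 <= x /\ c (- z)%Z <= y /\ inK C2 C3 z.

Definition in_par_boundary (T : R) (c : Z -> R) (C2 C3 : Z) (t x y : R) (z : Z) : Prop :=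
  (0 <= t <= T /\ inObar c C2 C3 x y z) /\ ~ (0 <= t < T /\ inO c C2 C3 x y z).

Definition inGamma_b (c : Z -> R) (C2 C3 : Z) (y : R) (z zt : Z) : bool :=
  if Rle_dec (c (zt - z)%Z + c (- zt)%Z) y then negb (Z.eqb zt z) else false.

Definition Gamma_list (c : Z -> R) (C2 C3 : Z) (y : R) (z : Z) : list Z :=
  List.filter (inGamma_b c C2 C3 y z) (Klist C2 C3).

(* Maximum of a finite list of reals; None stands for the max over the empty set, i.e. -infinity. *)
Definition list_max (l : list R) : option R :=
  List.fold_right (fun r acc => match acc with
                                | None => Some r
                                | Some m => Some (Rmax r m) end) None l.

Definition Sop (c : Z -> R) (C2 C3 : Z) (phi : R -> R -> R -> Z -> R)
  (t x y : R) (z : Z) : option R :=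
  list_max (List.map (fun zt => phi t x (y - c (zt - z)%Z) zt) (Gamma_list c C2 C3 y z)).

(* (u - s) > a, where s is an extended real in [-infinity, +infinity) (None = -infinity). *)
Definition minus_ext_gt (u : R) (s : option R) (a : R) : Prop :=
  match s with None => True | Some m => u - m > a end.

(* min{A, u - s} >= 0, with s in [-infinity, +infinity) (None = -infinity, so u - s = +infinity). *)
Definition min_ext_ge0 (A u : R) (s : option R) : Prop :=
  A >= 0 /\ match s with None => True | Some m => u - m >= 0 end.

Definition Lop (b sigma : R -> R -> R) (t x : R) (z : Z)
  (px py pxx pxy pyy : R) : R :=
  b t x * px + / 2 * (sigma t x) ^ 2 * pxx
  + IZR z * b t x * py + / 2 * (IZR z) ^ 2 * (sigma t x) ^ 2 * pyy
  + IZR z * (sigma t x) ^ 2 * pxy.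

Definition cont3_at (f : R -> R -> R -> R) (t x y : R) : Prop :=
  forall e, 0 < e -> exists d, 0 < d /\
    forall t' x' y', Rabs (t' - t) < d -> Rabs (x' - x) < d -> Rabs (y' - y) < d ->
      Rabs (f t' x' y' - f t x y) < e.

Definition inD (T t x : R) : Prop := 0 < t < T /\ 0 < x.

Definition is_C12 (T : R) (phi phit phix phiy phixx phixy phiyy : R -> R -> R -> Z -> R) : Prop :=
  forall t x y z, inD T t x ->
    derivable_pt_lim (fun s => phi s x y z) t (phit t x y z) /\
    derivable_pt_lim (fun s => phi t s y z) x (phix t x y z) /\
    derivable_pt_lim (fun s => phi t x s z) y (phiy t x y z) /\
    derivable_pt_lim (fun s => phix t s y z) x (phixx t x y z) /\
    derivable_pt_lim (fun s => phix t x s z) y (phixy t x y z) /\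
    derivable_pt_lim (fun s => phiy t s y z) x (phixy t x y z) /\
    derivable_pt_lim (fun s => phiy t x s z) y (phiyy t x y z) /\
    cont3_at (fun a b' d => phi a b' d z) t x y /\
    cont3_at (fun a b' d => phit a b' d z) t x y /\
    cont3_at (fun a b' d => phix a b' d z) t x y /\
    cont3_at (fun a b' d => phiy a b' d z) t x y /\
    cont3_at (fun a b' d => phixx a b' d z) t x y /\
    cont3_at (fun a b' d => phixy a b' d z) t x y /\
    cont3_at (fun a b' d => phiyy a b' d z) t x y.

Definition continuous_on_closure (T : R) (c : Z -> R) (C2 C3 : Z)
  (v : R -> R -> R -> Z -> R) : Prop :=
  forall t x y z, 0 <= t <= T -> inObar c C2 C3 x y z ->
    forall e, 0 < e -> exists d, 0 < d /\
      forall t' x' y', 0 <= t' <= T -> inObar c C2 C3 x' y' z ->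
        Rabs (t' - t) < d -> Rabs (x' - x) < d -> Rabs (y' - y) < d ->
        Rabs (v t' x' y' z - v t x y z) < e.

Definition viscosity_supersolution (T : R) (b sigma : R -> R -> R) (c : Z -> R)
  (U : R -> R) (C2 C3 : Z) (v : R -> R -> R -> Z -> R) : Prop :=
  (forall t0 x0 y0 z0, 0 < t0 < T -> inO c C2 C3 x0 y0 z0 ->
    forall phi phit phix phiy phixx phixy phiyy,
      is_C12 T phi phit phix phiy phixx phixy phiyy ->
      (forall t x y z, 0 < t < T -> inO c C2 C3 x y z -> phi t x y z <= v t x y z) ->
      phi t0 x0 y0 z0 = v t0 x0 y0 z0 ->
      min_ext_ge0
        (- phit t0 x0 y0 z0
         - Lop b sigma t0 x0 z0 (phix t0 x0 y0 z0) (phiy t0 x0 y0 z0)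
               (phixx t0 x0 y0 z0) (phixy t0 x0 y0 z0) (phiyy t0 x0 y0 z0))
        (phi t0 x0 y0 z0) (Sop c C2 C3 phi t0 x0 y0 z0))
  /\ (forall t x y z, in_par_boundary T c C2 C3 t x y z ->
        v t x y z >= U (y - c (- z)%Z)).

(* Main.v *)
Require Import Defs.
From Stdlib Require Import Reals ZArith List Lra Lia.
Open Scope R_scope.

Lemma lm_none (l : list R) : Defs.list_max l = None -> l = nil.
Proof. destruct l; simpl; auto. destruct (Defs.list_max l); discriminate. Qed.

Lemma lm_le (l : list R) : forall m, Defs.list_max l = Some m -> forall r, In r l -> r <= m.
Proof.
  induction l as [|a l IH]; intros m H r Hr; [destruct Hr|].
  change (Defs.list_max (a::l)) with
    (match Defs.list_max l with None => Some a | Some m => Some (Rmax a m) end) in H.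
  destruct (Defs.list_max l) as [m'|] eqn:E; inversion H; subst; destruct Hr as [->|Hr].
  - apply Rmax_l.
  - eapply Rle_trans; [eapply IH; eauto| apply Rmax_r].
  - lra.
  - apply lm_none in E; subst; destruct Hr.
Qed.

Lemma lm_in (l : list R) : forall m, Defs.list_max l = Some m -> In m l.
Proof.
  induction l as [|a l IH]; intros m H; [discriminate|].
  change (Defs.list_max (a::l)) with
    (match Defs.list_max l with None => Some a | Some m => Some (Rmax a m) end) in H.
  destruct (Defs.list_max l) as [m'|] eqn:E; inversion H; subst.
  - unfold Rmax; destruct (Rle_dec a m'); [right; auto | left; auto].
  - left; auto.
Qed.

Lemma dlin (f g : R -> R) x l a k l' :
  derivable_pt_lim f x l -> (forall s, g s = f s + (a*s+k)) -> l' = l + a ->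
  derivable_pt_lim g x l'.
Proof.
  intros H Hg ->. intros e He. destruct (H e He) as [d Hd]. exists d.
  intros h Hh0 Hh. rewrite !Hg.
  replace ((f (x + h) + (a * (x + h) + k) - (f x + (a * x + k))) / h - (l + a))
    with ((f (x + h) - f x) / h - l) by (field; auto).
  apply Hd; auto.
Qed.

Lemma clin (f g : R -> R -> R -> R) t x y p q r k :
  cont3_at f t x y -> (forall a b d, g a b d = f a b d + (p*a + q*b + r*d + k)) ->
  cont3_at g t x y.
Proof.
  intros H Hg e He. destruct (H (e/2)) as [d0 [Hd0 Hd]]; [lra|].
  set (K := Rabs p + Rabs q + Rabs r + 1).
  assert (HK : 0 < K) by (unfold K; pose proof (Rabs_pos p); pose proof (Rabs_pos q);
    pose proof (Rabs_pos r); lra).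
  exists (Rmin d0 (e/(2*K))). split.
  { apply Rmin_pos; auto. apply Rdiv_lt_0_compat; lra. }
  intros t' x' y' H1 H2 H3.
  pose proof (Rmin_l d0 (e/(2*K))). pose proof (Rmin_r d0 (e/(2*K))).
  rewrite !Hg.
  replace (f t' x' y' + (p * t' + q * x' + r * y' + k) - (f t x y + (p * t + q * x + r * y + k)))
    with ((f t' x' y' - f t x y) + (p*(t'-t) + q*(x'-x) + r*(y'-y))) by ring.
  eapply Rle_lt_trans; [apply Rabs_triang|].
  assert (A : Rabs (f t' x' y' - f t x y) < e/2) by (apply Hd; lra).
  assert (B : Rabs (p*(t'-t) + q*(x'-x) + r*(y'-y)) <= (Rabs p + Rabs q + Rabs r) * (e/(2*K))).
  { eapply Rle_trans; [apply Rabs_triang|].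
    eapply Rle_trans; [apply Rplus_le_compat_r; apply Rabs_triang|].
    rewrite !Rabs_mult.
    pose proof (Rabs_pos p); pose proof (Rabs_pos q); pose proof (Rabs_pos r).
    assert (Rabs p * Rabs (t'-t) <= Rabs p * (e/(2*K))) by (apply Rmult_le_compat_l; lra).
    assert (Rabs q * Rabs (x'-x) <= Rabs q * (e/(2*K))) by (apply Rmult_le_compat_l; lra).
    assert (Rabs r * Rabs (y'-y) <= Rabs r * (e/(2*K))) by (apply Rmult_le_compat_l; lra).
    lra. }
  assert ((Rabs p + Rabs q + Rabs r) * (e/(2*K)) <= e/2).
  { replace ((Rabs p + Rabs q + Rabs r) * (e/(2*K))) with ((K - 1) * (e/(2*K)))
      by (unfold K; ring).
    replace ((K-1)*(e/(2*K))) with (e/2 - e/(2*K)) by (field; lra).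
    assert (0 < e/(2*K)) by (apply Rdiv_lt_0_compat; lra). lra. }
  lra.
Qed.

Theorem mainTheorem9
  (T : R) (b sigma : R -> R -> R) (c : Z -> R) (U : R -> R) (C2 C3 : Z)
  (HT : 0 < T)
  (HC2 : (0 < C2)%Z) (HC3 : (0 < C3)%Z)
  (Hc0 : c 0%Z = 0)
  (Hcpos : forall z, z <> 0%Z -> 0 < c z)
  (Hcsub : forall z1 z2, c z1 + c z2 >= c (z1 + z2)%Z)
  (HU0 : U 0 = 0)
  (HUnonneg : forall r, 0 <= r -> 0 <= U r)
  (HUincr : forall r s, 0 <= r -> r < s -> U r < U s)
  (HUconc : forall r s l, 0 <= r -> 0 <= s -> r <> s -> 0 < l < 1 ->
             l * U r + (1 - l) * U s < U (l * r + (1 - l) * s))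
  (v : R -> R -> R -> Z -> R)
  (Hvcont : continuous_on_closure T c C2 C3 v)
  (Hvsuper : viscosity_supersolution T b sigma c U C2 C3 v)
  (Hbound : exists M, forall t x, 0 <= t <= T -> 0 <= x ->
              Rabs (b t x) + Rabs (sigma t x) <= M)
  (nb : R)
  (Hnb : is_lub (fun r => exists t x, 0 <= t <= T /\ 0 <= x /\ r = Rabs (b t x)) nb)
  (rho : R)
  (Hrho : (exists z0, z0 <> 0%Z /\ c z0 = 2 * rho) /\
          (forall z, z <> 0%Z -> 2 * rho <= c z))
  (C5 : R)
  (HC5 : C5 = nb * (IZR (Z.max C2 C3) + 1) + 2 * rho)
  (eps : R) (Heps : 0 < eps)
  (tb xb yb : R) (zb : Z)
  (Htb : 0 < tb < T) (HO : inO c C2 C3 xb yb zb)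
  (phi phit phix phiy phixx phixy phiyy : R -> R -> R -> Z -> R)
  (Hphi : is_C12 T phi phit phix phiy phixx phixy phiyy)
  (Hle : forall t x y z, 0 < t < T -> inO c C2 C3 x y z ->
           phi t x y z <= v t x y z + eps * (x + y + C5 * (T - t)))
  (Heq : phi tb xb yb zb = v tb xb yb zb + eps * (xb + yb + C5 * (T - tb))) :
  minus_ext_gt (phi tb xb yb zb) (Sop c C2 C3 phi tb xb yb zb) (eps * rho)
  /\ - phit tb xb yb zb
     - Lop b sigma tb xb zb (phix tb xb yb zb) (phiy tb xb yb zb)
           (phixx tb xb yb zb) (phixy tb xb yb zb) (phiyy tb xb yb zb)
     > eps * rho.
Proof.
  assert (Hrpos : 0 < rho).
  { destruct Hrho as [[z0 [Hz0 Hcz]] _]. pose proof (Hcpos z0 Hz0). lra. }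
  set (psi := fun t x y z => phi t x y z - eps * (x + y + C5 * (T - t))).
  set (psit := fun t x y z => phit t x y z + eps * C5).
  set (psix := fun t x y z => phix t x y z - eps).
  set (psiy := fun t x y z => phiy t x y z - eps).
  assert (HC : is_C12 T psi psit psix psiy phixx phixy phiyy).
  { intros t x y z HD.
    destruct (Hphi t x y z HD) as (D1 & D2 & D3 & D4 & D5 & D6 & D7 & K1 & K2 & K3 & K4 & K5 & K6 & K7).
    repeat split.
    - eapply dlin; [exact D1| |]. intro s; unfold psi.
      instantiate (1 := - eps * (x + y + C5 * T)). instantiate (1 := eps * C5). ring.
      unfold psit; ring.
    - eapply dlin; [exact D2| |]. intro s; unfold psi.
      instantiate (1 := - eps * (y + C5 * (T - t))). instantiate (1 := - eps). ring.
      unfold psix; ring.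
    - eapply dlin; [exact D3| |]. intro s; unfold psi.
      instantiate (1 := - eps * (x + C5 * (T - t))). instantiate (1 := - eps). ring.
      unfold psiy; ring.
    - eapply dlin; [exact D4| |]. intro s; unfold psix.
      instantiate (1 := - eps). instantiate (1 := 0). ring. ring.
    - eapply dlin; [exact D5| |]. intro s; unfold psix.
      instantiate (1 := - eps). instantiate (1 := 0). ring. ring.
    - eapply dlin; [exact D6| |]. intro s; unfold psiy.
      instantiate (1 := - eps). instantiate (1 := 0). ring. ring.
    - eapply dlin; [exact D7| |]. intro s; unfold psiy.
      instantiate (1 := - eps). instantiate (1 := 0). ring. ring.
    - eapply clin; [exact K1|]. intros a b' d; unfold psi.
      instantiate (1 := - eps * C5 * T). instantiate (1 := - eps).
      instantiate (1 := - eps). instantiate (1 := eps * C5). ring.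
    - eapply clin; [exact K2|]. intros a b' d; unfold psit.
      instantiate (1 := eps * C5). instantiate (1 := 0).
      instantiate (1 := 0). instantiate (1 := 0). ring.
    - eapply clin; [exact K3|]. intros a b' d; unfold psix.
      instantiate (1 := - eps). instantiate (1 := 0).
      instantiate (1 := 0). instantiate (1 := 0). ring.
    - eapply clin; [exact K4|]. intros a b' d; unfold psiy.
      instantiate (1 := - eps). instantiate (1 := 0).
      instantiate (1 := 0). instantiate (1 := 0). ring.
    - exact K5.
    - exact K6.
    - exact K7. }
  destruct Hvsuper as [Hsup _].
  assert (Hm := Hsup tb xb yb zb Htb HO psi psit psix psiy phixx phixy phiyy HC).
  assert (Hm' : forall t x y z, 0 < t < T -> inO c C2 C3 x y z -> psi t x y z <= v t x y z).
  { intros t x y z H1 H2. unfold psi. pose proof (Hle t x y z H1 H2). lra. }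
  assert (Hpv : psi tb xb yb zb = v tb xb yb zb) by (unfold psi; lra).
  specialize (Hm Hm' Hpv). destruct Hm as [HA HS]. split.
  - unfold minus_ext_gt. destruct (Sop c C2 C3 phi tb xb yb zb) as [m|] eqn:E; [|exact I].
    unfold Sop in E. apply lm_in in E as Hin.
    apply in_map_iff in Hin. destruct Hin as [zt [Hzt Hin]].
    unfold Sop in HS.
    destruct (Defs.list_max (map (fun zt0 => psi tb xb (yb - c (zt0 - zb)%Z) zt0)
                 (Gamma_list c C2 C3 yb zb))) as [m'|] eqn:E'.
    2:{ apply lm_none in E'. destruct (Gamma_list c C2 C3 yb zb); [destruct Hin|discriminate]. }
    assert (Hle' := lm_le _ _ E' (psi tb xb (yb - c (zt - zb)%Z) zt)
                     (in_map (fun zt0 => psi tb xb (yb - c (zt0 - zb)%Z) zt0) _ _ Hin)).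
    unfold Gamma_list in Hin. apply filter_In in Hin. destruct Hin as [_ Hg].
    unfold inGamma_b in Hg. destruct (Rle_dec _ _); [|discriminate].
    assert (Hne : zt <> zb) by (intro; subst; rewrite Z.eqb_refl in Hg; discriminate).
    assert (Hc2 : 2 * rho <= c (zt - zb)%Z) by (apply Hrho; lia).
    subst m. unfold psi in *.
    assert (eps * (2*rho) <= eps * c (zt - zb)%Z) by (apply Rmult_le_compat_l; lra).
    assert (eps * rho < eps * (2 * rho)) by (apply Rmult_lt_compat_l; lra).
    lra.
  - unfold psit, psix, psiy, Lop in *.
    destruct HO as (Hx0 & _ & HK). unfold inK in HK.
    assert (Hbn : Rabs (b tb xb) <= nb).
    { apply (proj1 Hnb). exists tb, xb. lra. }
    assert (HZ : Rabs (IZR zb) <= IZR (Z.max C2 C3)).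
    { rewrite <- abs_IZR. apply IZR_le. lia. }
    assert (Hb1 : b tb xb * (1 + IZR zb) <= nb * (IZR (Z.max C2 C3) + 1)).
    { eapply Rle_trans; [apply Rle_abs|]. rewrite Rabs_mult.
      eapply Rle_trans; [apply Rmult_le_compat_l; [apply Rabs_pos|apply Rabs_triang]|].
      rewrite Rabs_R1. rewrite (Rplus_comm (IZR _) 1).
      apply Rmult_le_compat; try lra; try apply Rabs_pos.
      pose proof (Rabs_pos (IZR zb)); lra. }
    assert (H2 : eps * (2*rho) <= eps * (C5 - b tb xb * (1 + IZR zb)))
      by (apply Rmult_le_compat_l; lra).
    assert (eps * rho < eps * (2 * rho)) by (apply Rmult_lt_compat_l; lra).
    match type of HA with ?A >= 0 => set (AA := A) in HA end.
    match goal with |- ?G > _ => assert (G = AA + eps * (C5 - b tb xb * (1 + IZR zb))) end.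
    { unfold AA. ring. }
    lra.
Qed.
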